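(* Let $X$ be a real Banach space having Efremov's property $(\mathcal{E})$. Then $S_1(Y)=X^*$ for every norming linear subspace $Y\subset X^*$. Consequently, $X$ is fully Mazur.
   Context: For $A\subset X^*$, $S_1(A)$ denotes the set of all limits of $w^*$-convergent sequences contained in $A$. $X$ has Efremov's property $(\mathcal{E})$ if $S_1(C)=\overline{C}^{w^*}$ for every convex bounded set $C\subset X^*$. A linear subspace $Y\subset X^*$ is norming if $|||x|||=\sup\{x^*(x): x^*\in Y,\ \|x^*\|\le 1\}$ defines an equivalent norm on $X$. $X$ is fully Mazur if for every norming and norm-closed subspace $Y\subset X^*$, every $w^*$-sequentially continuous linear functional $f:Y\to\mathbb{R}$ is $w^*$-continuous. *)

(* Defs.v *)
From HB Require Import structures.
From mathcomp Require Import all_boot all_order all_algebra.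
From mathcomp Require Import all_classical all_reals all_analysis.
Set Implicit Arguments. Unset Strict Implicit. Unset Printing Implicit Defensive.
Import Order.TTheory GRing.Theory Num.Theory.
Import numFieldNormedType.Exports.
Local Open Scope classical_set_scope.
Local Open Scope ring_scope.

Section Dual.
Variables (R : realType) (X : normedModType R).

Definition dualp (f : X -> R) : Prop :=
  (forall (a : R) (x y : X), f (a *: x + y) = a * f x + f y) /\ continuous f.

Definition dualset : set (X -> R) := [set f | dualp f].

Definition dual_norm (f : X -> R) : R :=
  sup [set `|f x| | x in [set x : X | `|x| <= 1]].

Definition wstar_cvg (u : nat -> X -> R) (f : X -> R) : Prop :=
  forall x : X, u n x @[n --> \oo] --> f x.

Definition S1 (A : set (X -> R)) : set (X -> R) :=
  [set f | dualp f /\ exists u : nat -> X -> R,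
     (forall n, A (u n)) /\ wstar_cvg u f].

(* w*-closure of A (in Xdual) : basic w*-neighbourhoods are given by finitely
   many points of X and a radius *)
Definition wstar_closure (A : set (X -> R)) : set (X -> R) :=
  [set f | dualp f /\ forall (s : seq X) (e : R), 0 < e ->
     exists g, A g /\ forall x, x \in s -> `|g x - f x| < e].

Definition dual_convex (C : set (X -> R)) : Prop :=
  forall f g (t : R), C f -> C g -> 0 <= t <= 1 ->
    C (fun x => t * f x + (1 - t) * g x).

Definition dual_bounded (C : set (X -> R)) : Prop :=
  exists M : R, forall f, C f -> dual_norm f <= M.

Definition efremov : Prop :=
  forall C : set (X -> R), C `<=` dualset -> dual_convex C -> dual_bounded C ->
    S1 C = wstar_closure C.

Definition dual_subspace (Y : set (X -> R)) : Prop :=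
  [/\ Y `<=` dualset, Y (fun _ => 0) &
      forall (a : R) f g, Y f -> Y g -> Y (fun x => a * f x + g x)].

Definition norming_norm (Y : set (X -> R)) (x : X) : R :=
  sup [set f x | f in [set f | Y f /\ dual_norm f <= 1]].

(* Y is norming: ||| . ||| is an equivalent norm on X
   (the bound |||x||| <= ||x|| always holds for Y in Xdual). *)
Definition norming (Y : set (X -> R)) : Prop :=
  dual_subspace Y /\
  exists c m : R, 0 < c /\ 0 < m /\
    forall x : X, c * `|x| <= norming_norm Y x /\ norming_norm Y x <= m * `|x|.

Definition norm_closed (Y : set (X -> R)) : Prop :=
  forall (u : nat -> X -> R) (f : X -> R), (forall n, Y (u n)) -> dualp f ->
    dual_norm (fun x => u n x - f x) @[n --> \oo] --> (0 : R) -> Y f.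

Definition linear_on (Y : set (X -> R)) (F : (X -> R) -> R) : Prop :=
  forall (a : R) f g, Y f -> Y g -> F (fun x => a * f x + g x) = a * F f + F g.

Definition wstar_seq_continuous_on (Y : set (X -> R)) (F : (X -> R) -> R) : Prop :=
  forall (u : nat -> X -> R) f, (forall n, Y (u n)) -> Y f -> wstar_cvg u f ->
    F (u n) @[n --> \oo] --> F f.

Definition wstar_continuous_on (Y : set (X -> R)) (F : (X -> R) -> R) : Prop :=
  forall f, Y f -> forall e : R, 0 < e -> exists (s : seq X) (d : R), 0 < d /\
    forall g, Y g -> (forall x, x \in s -> `|g x - f x| < d) -> `|F g - F f| < e.

Definition fully_mazur : Prop :=
  forall Y : set (X -> R), norming Y -> norm_closed Y ->
    forall F : (X -> R) -> R, linear_on Y F -> wstar_seq_continuous_on Y F ->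
      wstar_continuous_on Y F.

End Dual.

(* Main.v *)
Require Import Defs.
From HB Require Import structures.
From mathcomp Require Import all_boot all_order all_algebra.
From mathcomp Require Import all_classical all_reals all_analysis.
From mathcomp Require Import ring lra.
Set Implicit Arguments. Unset Strict Implicit. Unset Printing Implicit Defensive.
Import Order.TTheory GRing.Theory Num.Theory.
Import numFieldNormedType.Exports.
Local Open Scope classical_set_scope.
Local Open Scope ring_scope.

Section Basics.
Variables (R : realType) (X : normedModType R).
Implicit Types (f g : X -> R).

Lemma dual0 f : dualp f -> f 0 = 0.
Proof.
case=> lin _; have := lin 1 0 0; rewrite scale1r addr0 mul1r => h.
by apply: (addrI (f 0)); rewrite addr0 -h.
Qed.

Lemma dualZ f a x : dualp f -> f (a *: x) = a * f x.
Proof. move=> df; have := df.1 a x 0; rewrite addr0 dual0 // addr0 //. Qed.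

Lemma dualD f x y : dualp f -> f (x + y) = f x + f y.
Proof. move=> df; have := df.1 1 x y; rewrite scale1r mul1r //. Qed.

Lemma dual_bnd f : dualp f -> exists K : R, 0 < K /\ forall x, `|x| <= 1 -> `|f x| <= K.
Proof.
move=> df; have := df.2 0; rewrite /continuous_at dual0 //.
move=> /cvgrPdist_lt /(_ 1 ltr01); rewrite nearE /= => /nbhs_ballP [d /= d0 hd].
exists (2 / d); split; first by rewrite divr_gt0.
move=> x x1.
have d2 : 0 <= d / 2 by rewrite divr_ge0 // ltW.
have hx : ball (0:X) d ((d / 2) *: x).
  rewrite -ball_normE /= sub0r normrN normrZ ger0_norm //.
  apply: (le_lt_trans (ler_wpM2l d2 x1)).
  by rewrite mulr1 ltr_pdivrMr // ltr_pMr // ltr1n.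
have := hd _ hx; rewrite /= dualZ // sub0r normrN normrM ger0_norm // => h.
have -> : `|f x| = (2 / d) * (d / 2 * `|f x|) by field; rewrite gt_eqF.
rewrite -[leRHS]mulr1 ler_wpM2l ?divr_ge0 // ?ltW //.
Qed.


Lemma dn_ub f x : dualp f -> `|x| <= 1 -> `|f x| <= dual_norm f.
Proof.
move=> df x1; have [K [K0 hK]] := dual_bnd df.
apply: ub_le_sup; last by exists x.
by exists K => _ [y y1 <-]; apply: hK.
Qed.

Lemma dn_ge0 f : dualp f -> 0 <= dual_norm f.
Proof.
move=> df; have := @dn_ub f 0 df; rewrite normr0 ler01 (dual0 df) normr0.
exact.
Qed.

Lemma dn_le f x : dualp f -> `|f x| <= dual_norm f * `|x|.
Proof.
move=> df; have [->|x0] := eqVneq x 0; first by rewrite (dual0 df) !normr0 mulr0.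
have nx : 0 < `|x| by rewrite normr_gt0.
have := @dn_ub f (`|x|^-1 *: x) df.
rewrite normrZ normfV normr_id mulVf ?gt_eqF // lexx => /(_ isT).
rewrite dualZ // normrM normfV normr_id => h.
by rewrite mulrC -ler_pdivrMl // mulrC.
Qed.

Lemma dn_leK f (K : R) : 0 <= K -> (forall x, `|f x| <= K * `|x|) -> dual_norm f <= K.
Proof.
move=> K0 hK; apply: ge_sup; first by exists `|f 0|, 0 => //=; rewrite normr0 ler01.
move=> _ [y y1 <-]; apply: (le_trans (hK y)).
by rewrite -[leRHS]mulr1 ler_wpM2l.
Qed.


Lemma dual_sum f (s : seq X) (a : X -> R) : dualp f ->
  f (\sum_(x <- s) a x *: x) = \sum_(x <- s) a x * f x.
Proof.
move=> df; elim: s => [|y s IH]; first by rewrite !big_nil (dual0 df).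
by rewrite !big_cons dualD // dualZ // IH.
Qed.

Lemma le_sum_mem (s : seq X) (F : X -> R) y : (forall x, 0 <= F x) -> y \in s ->
  F y <= \sum_(x <- s) F x.
Proof.
move=> F0; elim: s => [|z s IH] //; rewrite in_cons big_cons => /orP [/eqP ->|ys].
  by rewrite lerDl sumr_ge0.
by rewrite (le_trans (IH ys)) // lerDr.
Qed.

Lemma sub_scale Y a f : dual_subspace Y -> Y f -> Y (fun x => a * f x).
Proof.
case=> _ Y0 YD Yf; have := YD a f (fun _ => 0) Yf Y0.
by congr Y; apply/funext => x; rewrite addr0.
Qed.

Lemma sub_comb Y a b f g : dual_subspace Y -> Y f -> Y g -> Y (fun x => a * f x + b * g x).
Proof.
move=> dY Yf Yg; have [_ _ YD] := dY; exact: (YD a f _ Yf (sub_scale b dY Yg)).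
Qed.

Lemma norming_wit Y : norming Y -> exists c : R, 0 < c /\ forall v : X,
  exists g, Y g /\ dual_norm g <= 1 /\ c * `|v| <= g v.
Proof.
case=> dY [c [m [c0 [m0 hcm]]]]; have [Ysub Y0 _] := dY.
have N0 : dual_norm (fun _ : X => 0 : R) <= 1.
  by apply: dn_leK => // x; rewrite normr0 mul1r.
exists (c / 2); split; first by rewrite divr_gt0.
move=> v; have [->|v0] := eqVneq v 0.
  by exists (fun _ => 0); rewrite normr0 mulr0.
have nv : 0 < `|v| by rewrite normr_gt0.
have [h _] := hcm v.
have : c / 2 * `|v| < norming_norm Y v.
  by apply: (lt_le_trans _ h); rewrite ltr_pM2r // ltr_pdivrMr // ltr_pMr // ltr1n.
move=> /sup_gt [].
  by exists 0, (fun _ => 0).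
by move=> _ [g [Yg Ng] <-] hg; exists g; split => //; split => //; apply: ltW.
Qed.


Lemma dualB f x y : dualp f -> f (x - y) = f x - f y.
Proof. move=> df; rewrite dualD // -scaleN1r dualZ //; ring. Qed.

Lemma small_inv (e : R) : 0 < e -> exists N : nat, forall n, (N <= n)%N -> n.+1%:R^-1 < e.
Proof.
move=> e0; exists (Num.Def.archi_bound e^-1) => n Nn.
rewrite -[e]invrK ltf_pV2 ?posrE ?invr_gt0 ?ltr0Sn //.
apply: (lt_le_trans (archi_boundP _)); first by rewrite invr_ge0 ltW.
by rewrite ler_nat; apply: (leq_trans Nn).
Qed.

Lemma cvg_bnd (u : nat -> R) (l K : R) :
  (forall n, `|u n - l| <= K * n.+1%:R^-1) -> u n @[n --> \oo] --> l.
Proof.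
move=> hu; apply/cvgrPdist_le => e e0.
have K1 : 0 < `|K| + 1 by rewrite ltr_wpDl.
have [N hN] := small_inv (divr_gt0 e0 K1).
exists N => // n /= Nn; rewrite distrC; apply: (le_trans (hu n)).
have := hN n Nn; rewrite ltr_pdivlMr // => h.
have i0 : 0 <= n.+1%:R^-1 :> R by rewrite invr_ge0 ler0n.
have KK : K <= `|K| + 1 by apply: (le_trans (ler_norm K)); rewrite lerDl ler01.
apply: (le_trans (ler_wpM2r i0 KK)).
by rewrite mulrC ltW.
Qed.

Lemma part1 Y f : efremov X -> norming Y -> dualp f -> S1 Y f.
Proof.
move=> Ef nY df; have [c [c0 wit]] := norming_wit nY.
have [dY _] := nY; have [Ysub Y0 YD] := dY.
set M := dual_norm f / c + 1.
have Nf0 := dn_ge0 df.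
have M0 : 0 < M by rewrite /M ltr_wpDl // divr_ge0 // ltW.
pose C := [set g | Y g /\ dual_norm g <= M].
have C0 : C (fun _ => 0).
  by split => //; apply: dn_leK; [exact: ltW|move=> x; rewrite normr0 mulr_ge0 // ltW].
have CS : C `<=` @dualset R X by move=> g [Yg _]; exact: Ysub.
have Cconv : dual_convex C.
  move=> g h t [Yg Ng] [Yh Nh] /andP [t0 t1]; split; first exact: sub_comb.
  apply: dn_leK; first exact: ltW.
  have t1' : 0 <= 1 - t by rewrite subr_ge0.
  move=> x; apply: (le_trans (ler_normD _ _)); rewrite !normrM (ger0_norm t0) (ger0_norm t1').
  have hg : `|g x| <= M * `|x|.
    exact: (le_trans (dn_le x (Ysub _ Yg)) (ler_wpM2r (normr_ge0 x) Ng)).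
  have hh : `|h x| <= M * `|x|.
    exact: (le_trans (dn_le x (Ysub _ Yh)) (ler_wpM2r (normr_ge0 x) Nh)).
  apply: (le_trans (lerD (ler_wpM2l t0 hg) (ler_wpM2l t1' hh))).
  by rewrite -mulrDl addrC subrK mul1r.
have Cb : dual_bounded C by exists M => g [].
have E := Ef C CS Cconv Cb.
suff : wstar_closure C f.
  rewrite -E => -[_ [u [uC uf]]]; split => //; exists u; split => // n; exact: (uC n).1.
split => // s e e0.
apply: contrapT => hn.
pose Phi g := \sum_(x <- s) (g x - f x) ^+ 2.
have Phie : forall g, C g -> e ^+ 2 <= Phi g.
  move=> g Cg; apply: contrapT => hlt; apply: hn; exists g; split => // x xs.
  rewrite ltNge; apply/negP => hx; apply: hlt.
  rewrite /Phi; apply: (le_trans _ (le_sum_mem (F := fun x => (g x - f x) ^+ 2) _ xs)).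
    rewrite -(real_normK (num_real (g x - f x))).
    by apply: lerXn2r => //; rewrite nnegrE ?ltW.
  by move=> y; rewrite sqr_ge0.
pose PhiS := [set Phi g | g in C].
have lbP : has_lbound PhiS.
  by exists 0 => _ [g _ <-]; rewrite /Phi sumr_ge0 // => x _; rewrite sqr_ge0.
have neP : PhiS !=set0 by exists (Phi (fun _ => 0)), (fun _ => 0).
set B := \sum_(x <- s) (2 * M * `|x|) ^+ 2 + 1.
have B0 : 0 < B by rewrite /B ltr_wpDl // sumr_ge0 // => x _; rewrite sqr_ge0.
have e20 : 0 < e ^+ 2 by rewrite exprn_gt0.
set t := e ^+ 2 / (2 * B + e ^+ 2).
have D0 : 0 < 2 * B + e ^+ 2 by rewrite addr_gt0 // mulr_gt0.
have t0 : 0 < t by rewrite divr_gt0.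
have t1 : t <= 1 by rewrite ler_pdivrMr // mul1r lerDr mulr_ge0 // ltW.
have tB : t * B <= e ^+ 2 / 2.
  rewrite /t mulrAC ler_pdivrMr //.
  have -> : e ^+ 2 / 2 * (2 * B + e ^+ 2) = e ^+ 2 * B + e ^+ 2 * e ^+ 2 / 2 by field.
  by rewrite lerDl divr_ge0 // mulr_ge0 // ltW.
set eta := t * e ^+ 2 / 2.
have eta0 : 0 < eta by rewrite divr_gt0 // mulr_gt0.
have [_ [g0 Cg0 <-] hg0] := inf_adherent eta0 (conj neP lbP).
have Mb : forall g, C g -> forall x, `|g x| <= M * `|x|.
  move=> g [Yg Ng] x.
  exact: (le_trans (dn_le x (Ysub _ Yg)) (ler_wpM2r (normr_ge0 x) Ng)).
have key : forall g, C g ->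
    \sum_(x <- s) (f x - g0 x) * (g x - g0 x) <= e ^+ 2 / 2.
  move=> g Cg.
  have Ct := Cconv g g0 t Cg Cg0 (andb_true_intro (conj (ltW t0) t1)).
  have := ge_inf lbP (ex_intro2 _ _ _ Ct erefl).
  set S := \sum_(x <- s) (f x - g0 x) * (g x - g0 x).
  set Q := \sum_(x <- s) (g x - g0 x) ^+ 2.
  have -> : Phi (fun x => t * g x + (1 - t) * g0 x) = Phi g0 - (2 * t) * S + t ^+ 2 * Q.
    rewrite /Phi /S /Q !mulr_sumr -sumrB -big_split /=.
    by apply: eq_bigr => x _; ring.
  have QB : Q <= B.
    rewrite /Q /B -[X in X <= _]addr0; apply: lerD; last exact: ler01.
    apply: ler_sum => x _;
      have := Mb _ Cg x; have := Mb _ Cg0 x; have := normr_ge0 x;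
      move: (g x) (g0 x) `|x| => a b z; rewrite !ler_norml => z0 /andP [h1 h2] /andP [h3 h4];
      have M0' := M0; nra.
  move=> h.
  have h2 : 2 * t * S < t * e ^+ 2 / 2 + t ^+ 2 * Q by rewrite /eta in hg0; lra.
  have h3 : t ^+ 2 * Q <= t * (e ^+ 2 / 2).
    rewrite expr2 -mulrA; apply: ler_wpM2l; first exact: ltW.
    apply: (le_trans _ tB); apply: ler_wpM2l => //; exact: ltW.
  have : t * (2 * S) < t * e ^+ 2 by lra.
  by rewrite ltr_pM2l // => ?; lra.
pose v := \sum_(x <- s) (f x - g0 x) *: x.
have dg0 : dualp g0 by exact: CS.
have hv : forall g, dualp g -> g v - g0 v = \sum_(x <- s) (f x - g0 x) * (g x - g0 x).
  move=> g dg; rewrite /v !dual_sum // -sumrB.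
  by apply: eq_bigr => x _; ring.
have fv : f v - g0 v = Phi g0.
  by rewrite hv // /Phi; apply: eq_bigr => x _; ring.
have [g1 [Yg1 [Ng1 hg1]]] := wit v.
have dg1 := Ysub _ Yg1.
have Cg : C (fun x => M * g1 x).
  split; first exact: sub_scale.
  apply: dn_leK; first exact: ltW.
  move=> x; rewrite normrM (ger0_norm (ltW M0)); apply: ler_wpM2l; first exact: ltW.
  rewrite -[X in _ <= X]mul1r.
  exact: (le_trans (dn_le x dg1) (ler_wpM2r (normr_ge0 x) Ng1)).
have k := key _ Cg.
have dgM : dualp (fun x => M * g1 x) by exact: CS.
rewrite -hv // in k.
have P0 := Phie _ Cg0.
have fle : f v <= dual_norm f * `|v|.
  by apply: (le_trans (ler_norm _)); exact: dn_le.
have Mc : dual_norm f <= M * c.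
  have -> : M * c = dual_norm f + c by rewrite /M; field; rewrite gt_eqF.
  by rewrite lerDl ltW.
have : dual_norm f * `|v| <= M * g1 v.
  apply: (le_trans (ler_wpM2r (normr_ge0 v) Mc)); rewrite -mulrA.
  by apply: ler_wpM2l => //; exact: ltW.
lra.
Qed.


Section Lin.
Variables (Y : set (X -> R)) (F : (X -> R) -> R).
Hypotheses (dY : dual_subspace Y) (lF : linear_on Y F).

Lemma F0 : F (fun _ => 0) = 0.
Proof.
have [_ Y0 _] := dY; have := lF 1 Y0 Y0.
have -> : (fun x : X => 1 * (fun _ : X => (0:R)) x + (fun _ => 0) x) = (fun _ => 0).
  by apply/funext => x; rewrite mul1r addr0.
by rewrite mul1r => h; apply: (addrI (F (fun _ => 0))); rewrite addr0 -h.
Qed.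

Lemma FZ a g : Y g -> F (fun x => a * g x) = a * F g.
Proof.
have [_ Y0 _] := dY; move=> Yg; have := lF a Yg Y0; rewrite F0 addr0 => <-.
by congr F; apply/funext => x; rewrite addr0.
Qed.

Lemma F_bound : wstar_seq_continuous_on Y F ->
  exists L : R, 0 < L /\ forall g, Y g -> `|F g| <= L * dual_norm g.
Proof.
move=> sF; have [Ysub Y0 _] := dY.
apply: contrapT => nL.
have hn : forall n : nat, exists g, Y g /\ n.+1%:R * dual_norm g < `|F g|.
  move=> n; apply: contrapT => hg; apply: nL; exists n.+1%:R; split => // g Yg.
  by rewrite leNgt; apply/negP => h; apply: hg; exists g.
have [gs hgs] := choice hn.
pose u n := fun x => `|F (gs n)|^-1 * gs n x.
have Fn0 : forall n, 0 < `|F (gs n)|.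
  move=> n; have [_ h] := hgs n; apply: le_lt_trans h.
  by rewrite mulr_ge0 // dn_ge0 //; apply: Ysub; exact: (hgs n).1.
have Yu : forall n, Y (u n) by move=> n; apply: sub_scale => //; exact: (hgs n).1.
have Fu : forall n, `|F (u n)| = 1.
  move=> n; rewrite /u FZ; last exact: (hgs n).1.
  by rewrite normrM normfV normr_id mulVf // gt_eqF.
have wu : wstar_cvg u (fun _ => 0).
  move=> x; apply: (@cvg_bnd _ _ `|x|) => n.
  have [Yg h] := hgs n; have dg := Ysub _ Yg.
  rewrite subr0 /u normrM normfV normr_id.
  have := dn_le x dg => hx.
  have i0 : 0 <= `|F (gs n)|^-1 by rewrite invr_ge0 ltW.
  apply: (le_trans (ler_wpM2l i0 hx)).
  have N0 := dn_ge0 dg.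
  have : dual_norm (gs n) <= `|F (gs n)| * n.+1%:R^-1.
    by rewrite ler_pdivlMr // mulrC ltW.
  move=> h2; rewrite mulrA mulrC; apply: ler_wpM2l => //.
  by rewrite ler_pdivrMl // mulrC.
have := sF u _ Yu Y0 wu; rewrite F0.
move=> /cvgrPdist_lt /(_ 1 ltr01) [N _ /(_ N (leqnn N))] /=.
by rewrite sub0r normrN Fu ltxx.
Qed.

End Lin.

End Basics.

Section Part2.
Variables (R : realType) (X : completeNormedModType R).

Lemma represent (Y : set (X -> R)) (F : (X -> R) -> R) :
  efremov X -> norming Y -> linear_on Y F -> wstar_seq_continuous_on Y F ->
  exists x0 : X, forall g, Y g -> F g = g x0.
Proof.
move=> Ef nY lF sF; have [dY _] := nY; have [Ysub Y0 YD] := dY.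
pose H := [set g | Y g /\ F g = 0].
have [nH|nH] := pselect (norming H).
  exists 0 => g Yg; rewrite (dual0 (Ysub _ Yg)).
  have [_ [u [uH uc]]] := part1 Ef nH (Ysub _ Yg).
  have h1 := sF u g (fun n => (uH n).1) Yg uc.
  have h2 : F (u n) @[n --> \oo] --> (0:R).
    have -> : (fun n => F (u n)) = (fun _ => 0) by apply/funext => n; exact: (uH n).2.
    exact: cvg_cst.
  exact: (cvg_unique _ h1 h2).
have [[g1 [Yg1 Fg1]]|Fz] := pselect (exists g, Y g /\ F g != 0); last first.
  exists 0 => g Yg; rewrite (dual0 (Ysub _ Yg)); apply: contrapT => Fg.
  by apply: Fz; exists g; split => //; apply/eqP.
pose g0 := fun x => (F g1)^-1 * g1 x.
have Yg0 : Y g0 by apply: sub_scale.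
have dg0 := Ysub _ Yg0.
have Fg0 : F g0 = 1 by rewrite /g0 (FZ dY lF) // mulVf.
have F0' := F0 dY lF.
have dH : dual_subspace H.
  split; first by move=> g [Yg _]; exact: Ysub.
    by split.
  move=> a f g [Yf Ff] [Yg Fg]; split; first exact: YD.
  by rewrite lF // Ff Fg mulr0 addr0.
have [_ H0 _] := dH.
pose nn := norming_norm H.
have nn_ub : forall x, has_ubound [set f x | f in [set f | H f /\ dual_norm f <= 1]].
  move=> x; exists `|x| => _ [h [Hh Nh] <-].
  apply: (le_trans (ler_norm _)); apply: (le_trans (dn_le x (Ysub _ Hh.1))).
  by rewrite -[X in _ <= X]mul1r; apply: ler_wpM2r.
have N00 : dual_norm (fun _ : X => 0 : R) <= 1.
  by apply: dn_leK => // x; rewrite normr0 mul1r.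
have nn_ge0 : forall x, 0 <= nn x.
  move=> x; apply: (le_trans _ (ub_le_sup (nn_ub x) _)); last by exists (fun _ => 0).
  by [].
have nn_le : forall x, nn x <= 1 * `|x|.
  move=> x; apply: ge_sup; first by exists 0, (fun _ => 0).
  move=> _ [h [Hh Nh] <-]; rewrite mul1r.
  apply: (le_trans (ler_norm _)); apply: (le_trans (dn_le x (Ysub _ Hh.1))).
  by rewrite -[X in _ <= X]mul1r; apply: ler_wpM2r.
have small : forall d : R, 0 < d -> exists x, nn x < d * `|x|.
  move=> d d0; apply: contrapT => hn; apply: nH; split => //.
  exists d, 1; split => //; split => // x; split => //.
  by rewrite leNgt; apply/negP => h; apply: hn; exists x.
have hH : forall h, H h -> forall A : R, 0 < A -> dual_norm h <= A ->
    forall x, `|h x| <= A * nn x.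
  move=> h Hh A A0 NA x.
  have key : forall b : R, `|b| = A^-1 -> b * h x <= nn x.
    move=> b hb; apply: ub_le_sup; first exact: nn_ub.
    exists (fun y => b * h y) => //; split; first exact: sub_scale.
    apply: dn_leK => // y; rewrite normrM hb.
    apply: (le_trans (ler_wpM2l _ (dn_le y (Ysub _ Hh.1)))); first by rewrite invr_ge0 ltW.
    rewrite mulrA; apply: ler_wpM2r => //.
    by rewrite mulrC ler_pdivrMr // mul1r.
  have Ai : 0 < A^-1 by rewrite invr_gt0.
  have k1 := key A^-1 (ger0_norm (ltW Ai)).
  have k2 := key (- A^-1); rewrite normrN (ger0_norm (ltW Ai)) in k2.
  have k2' := k2 erefl.
  have [hx0|hx0] := lerP 0 (h x).
    rewrite (ger0_norm hx0); apply: (le_trans _ (ler_wpM2l (ltW A0) k1)).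
    by rewrite mulrA divff ?gt_eqF // mul1r.
  rewrite (ltr0_norm hx0); apply: (le_trans _ (ler_wpM2l (ltW A0) k2')).
  by rewrite mulrA mulrN divff ?gt_eqF // mulN1r.
have [c [c0 wit]] := norming_wit nY.
have [L [L0 hL]] := F_bound dY lF sF.
have Ng0 := dn_ge0 dg0.
set A := 1 + L * dual_norm g0.
have A0 : 0 < A by rewrite /A ltr_pwDl // mulr_ge0 // ltW.
have hwH : forall g, Y g -> H (fun y => (- F g) * g0 y + g y).
  move=> g Yg; split; first exact: YD.
  by rewrite lF // Fg0 mulr1 addNr.
have hwN : forall g, Y g -> dual_norm (fun y => (- F g) * g0 y + g y) <=
    `|F g| * dual_norm g0 + dual_norm g.
  move=> g Yg; apply: dn_leK; first by rewrite addr_ge0 ?mulr_ge0 //; exact: dn_ge0 (Ysub _ Yg).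
  move=> y; apply: (le_trans (ler_normD _ _)); rewrite normrM normrN mulrDl -mulrA.
  apply: lerD; last exact: dn_le (Ysub _ Yg).
  by apply: ler_wpM2l => //; exact: dn_le.
set kap := c / (4 * A).
have kap0 : 0 < kap by rewrite divr_gt0 // mulr_gt0.
have ip : forall n : nat, 0 < n.+1%:R^-1 :> R by move=> n; rewrite invr_gt0 ltr0Sn.
have [xs hxs] := choice (fun n : nat => small (kap * n.+1%:R^-1) (mulr_gt0 kap0 (ip n))).
have ip1 : forall n : nat, n.+1%:R^-1 <= 1 :> R.
  by move=> n; rewrite invf_le1 ?ltr0Sn // ler1n.
have xpos : forall n, 0 < `|xs n|.
  move=> n; have h2 := hxs n; have h1 := nn_ge0 (xs n); rewrite lt_neqAle normr_ge0 andbT.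
  case: eqP => // h0; rewrite -h0 mulr0 in h2.
  by have := lt_le_trans h2 h1; rewrite ltxx.
have nnx : forall n, A * nn (xs n) <= c / 4 * `|xs n|.
  move=> n; have := ltW (hxs n) => h.
  apply: (le_trans (ler_wpM2l (ltW A0) h)); rewrite mulrA; apply: ler_wpM2r => //.
  rewrite /kap mulrA.
  have -> : A * (c / (4 * A)) = c / 4 by field; rewrite gt_eqF.
  rewrite ler_pdivrMr ?ltr0Sn // -[X in X <= _]mulr1.
  by apply: ler_wpM2l; [rewrite divr_ge0 // ltW | rewrite ler1n].
have g0x : forall n, c / (2 * L) * `|xs n| <= `|g0 (xs n)|.
  move=> n; set x := xs n.
  have [gw [Ygw [Ngw hgw]]] := wit x.
  have FgwL : `|F gw| <= L.
    by apply: (le_trans (hL _ Ygw)); rewrite -[X in _ <= X]mulr1 ler_wpM2l // ltW.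
  have Nhw : dual_norm (fun y => (- F gw) * g0 y + gw y) <= A.
    apply: (le_trans (hwN _ Ygw)); rewrite /A addrC; apply: lerD => //.
    exact: ler_wpM2r.
  have := hH _ (hwH _ Ygw) _ A0 Nhw x; have := nnx n; rewrite -/x /= => h1 h2.
  have h3 : c / 2 * `|x| <= F gw * g0 x.
    have := ler_norm (- F gw * g0 x + gw x).
    rewrite mulNr in h2 *; rewrite mulrAC in h1; rewrite mulrAC.
    have w0 : 0 <= c * `|x| by rewrite mulr_ge0 // ltW.
    move: w0 h1 h2 hgw; move: (F gw * g0 x) (gw x) (c * `|x|) (A * nn x) => a b w u.
    move: `|_| => t; lra.
  have h4 : F gw * g0 x <= L * `|g0 x|.
    apply: (le_trans (ler_norm _)); rewrite normrM; apply: ler_wpM2r => //.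
  have -> : c / (2 * L) * `|x| = (c / 2 * `|x|) / L by field; rewrite gt_eqF.
  by rewrite ler_pdivrMr // [_ * L]mulrC; exact: le_trans h3 h4.
have g0xpos : forall n, 0 < `|g0 (xs n)|.
  by move=> n; apply: lt_le_trans (g0x n); rewrite mulr_gt0 // divr_gt0 // mulr_gt0.
pose z n := (g0 (xs n))^-1 *: xs n.
have g0z : forall n, g0 (z n) = 1.
  by move=> n; rewrite /z (dualZ _ _ dg0) mulVf // -normr_gt0.
set Kz := 2 * L * kap / c.
have Kz0 : 0 < Kz by apply: divr_gt0 => //; apply: mulr_gt0 => //; apply: mulr_gt0.
have Hz : forall h, H h -> forall A' : R, 0 < A' -> dual_norm h <= A' ->
    forall n, `|h (z n)| <= A' * Kz * n.+1%:R^-1.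
  move=> h Hh A' A'0 NA n; rewrite /z (dualZ _ _ (Ysub _ Hh.1)).
  rewrite normrM normfV mulrC ler_pdivrMr //.
  apply: (le_trans (hH _ Hh _ A'0 NA (xs n))).
  apply: (le_trans (ler_wpM2l (ltW A'0) (ltW (hxs n)))).
  have -> : A' * (kap * n.+1%:R^-1 * `|xs n|) =
      A' * Kz * n.+1%:R^-1 * (c / (2 * L) * `|xs n|).
    by rewrite /Kz; field; rewrite !gt_eqF.
  apply: ler_wpM2l; last exact: g0x.
  by rewrite divr_ge0 // mulr_ge0 // ltW.
have conv_g : forall g, Y g -> forall n,
    `|g (z n) - F g| <= (`|F g| * dual_norm g0 + dual_norm g + 1) * Kz * n.+1%:R^-1.
  move=> g Yg n.
  have A'0 : 0 < `|F g| * dual_norm g0 + dual_norm g + 1.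
    by rewrite ltr_pwDr // addr_ge0 ?mulr_ge0 //; exact: dn_ge0 (Ysub _ Yg).
  have NA : dual_norm (fun y => (- F g) * g0 y + g y) <=
      `|F g| * dual_norm g0 + dual_norm g + 1.
    by apply: (le_trans (hwN _ Yg)); rewrite lerDl ler01.
  by have := Hz _ (hwH _ Yg) _ A'0 NA n; rewrite /= g0z mulr1 addrC.
have NhwA : forall gw, Y gw -> dual_norm gw <= 1 ->
    dual_norm (fun y => (- F gw) * g0 y + gw y) <= A.
  move=> gw Ygw Ngw.
  have FgwL : `|F gw| <= L.
    by apply: (le_trans (hL _ Ygw)); rewrite -[X in _ <= X]mulr1 ler_wpM2l // ltW.
  apply: (le_trans (hwN _ Ygw)); rewrite /A addrC; apply: lerD => //.
  exact: ler_wpM2r.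
have cauchyz : forall n m, c * `|z n - z m| <= A * Kz * (n.+1%:R^-1 + m.+1%:R^-1).
  move=> n m; have [gw [Ygw [Ngw hgw]]] := wit (z n - z m).
  apply: (le_trans hgw); rewrite (dualB _ _ (Ysub _ Ygw)).
  have hk : forall k, gw (z k) = (fun y => (- F gw) * g0 y + gw y) (z k) + F gw.
    by move=> k /=; rewrite g0z; ring.
  rewrite (hk n) (hk m) opprD addrACA subrr addr0 mulrDr.
  apply: (le_trans (ler_norm _)); apply: (le_trans (ler_normB _ _)).
  by apply: lerD; apply: (Hz _ (hwH _ Ygw) _ A0 (NhwA _ Ygw Ngw)).
have zc : cvg (z @ \oo).
  apply/(cauchy_cvgP (z @ \oo)).
  apply: (cauchy_exP (z @ \oo)).
  red; move=> e e0.
  have AK : 0 < A * Kz := mulr_gt0 A0 Kz0.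
  have r0 : 0 < c * e / (2 * (A * Kz)).
    by apply: divr_gt0; [exact: mulr_gt0 | apply: mulr_gt0].
  have [N hN] := small_inv r0.
  exists (z N); exists N => // n /= Nn; rewrite -ball_normE /=.
  have h := cauchyz N n.
  have h1 := hN N (leqnn N); have h2 := hN n Nn.
  have : c * `|z N - z n| < c * e.
    apply: (le_lt_trans h).
    have -> : c * e = A * Kz * (2 * (c * e / (2 * (A * Kz)))) by field; rewrite !gt_eqF.
    by rewrite ltr_pM2l // mulr2n mulrDl mul1r ltrD.
  by rewrite ltr_pM2l.
exists (lim (z @ \oo)) => g Yg.
have h1 : g (z n) @[n --> \oo] --> g (lim (z @ \oo)).
  exact: (continuous_cvg _ ((Ysub _ Yg).2 _) zc).
have h2 : g (z n) @[n --> \oo] --> F g.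
  apply: cvg_bnd; exact: conv_g.
exact: (cvg_unique _ h2 h1).
Qed.

End Part2.

Theorem corollary3p4 (R : realType) (X : completeNormedModType R) :
  @efremov R X ->
  (forall Y : set (X -> R), norming Y -> S1 Y = @dualset R X) /\ @fully_mazur R X.
Proof.
move=> Ef; split.
  move=> Y nY; apply/seteqP; split => f; first by case.
  by move=> df; exact: part1 Ef nY df.
move=> Y nY _ F lF sF.
have [x0 hx0] := represent Ef nY lF sF.
move=> f Yf e e0; exists [:: x0], e; split => // g Yg hs.
by rewrite !hx0 //; apply: hs; rewrite mem_seq1.
Qed.
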